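(* Let $L_k>0$, $V_k^{\mathrm d}>0$, $R_k>0$, $t_k>0$, $V_k^{\mathrm c}>0$ and $\beta\in(0,1)$. For $\lambda_k\in[0,1]$ define \[ D_{\mathrm{comp}}^{\mathrm d}=\frac{\lambda_kL_k}{V_k^{\mathrm d}},\quad D_{\mathrm{tran}}^{\mathrm d}=\frac{\beta\lambda_kL_k}{t_kR_k},\quad D_{\mathrm{tran}}^{\mathrm c}=\frac{(1-\lambda_k)L_k}{t_kR_k},\quad D_{\mathrm{comp}}^{\mathrm c}=\frac{(1-\lambda_k)L_k}{V_k^{\mathrm c}}, \] and \[ D_k(\lambda_k)=\begin{cases}\max\{D_{\mathrm{comp}}^{\mathrm d}+D_{\mathrm{tran}}^{\mathrm d},\ D_{\mathrm{tran}}^{\mathrm c}+D_{\mathrm{comp}}^{\mathrm c}\}, & \text{if } D_{\mathrm{comp}}^{\mathrm d}\ge D_{\mathrm{tran}}^{\mathrm c},\\ D_{\mathrm{tran}}^{\mathrm c}+\max\{D_{\mathrm{tran}}^{\mathrm d},\ D_{\mathrm{comp}}^{\mathrm c}\}, & \text{if } D_{\mathrm{comp}}^{\mathrm d}< D_{\mathrm{tran}}^{\mathrm c}.\end{cases} \] Then a minimizer $\lambda_k^*$ of $D_k(\lambda_k)$ over $\lambda_k\in[0,1]$ is \[ \lambda_k^*=\begin{cases}\dfrac{V_k^{\mathrm d}(t_kR_k+V_k^{\mathrm c})}{V_k^{\mathrm d}V_k^{\mathrm c}(1+\beta)+t_kR_k(V_k^{\mathrm d}+V_k^{\mathrm c})},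 & \text{if } t_kR_k\ge\sqrt{\beta V_k^{\mathrm d}V_k^{\mathrm c}},\\[2ex] \dfrac{V_k^{\mathrm d}}{V_k^{\mathrm d}+t_kR_k}, & \text{if } t_kR_k<\sqrt{\beta V_k^{\mathrm d}V_k^{\mathrm c}}.\end{cases} \]
   Context: Partial compression offloading model: device $k$ compresses a fraction $\lambda_k$ of its $L_k$ raw bits locally at speed $V_k^{\mathrm d}$ and transmits the compressed $\beta\lambda_kL_k$ bits; the remaining $(1-\lambda_k)L_k$ raw bits are transmitted (average rate $t_kR_k$, where $t_k$ is the TDMA time fraction and $R_k$ the average channel rate) and compressed at the edge cloud with allocated speed $V_k^{\mathrm c}$; $\beta$ is the compression ratio. The channel carries only one of the two transmissions at a time, which gives the end-to-end delay $D_k(\lambda_k)$ above. *)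

(* Defs.v *)
From Stdlib Require Import Reals.
Open Scope R_scope.

Definition Dcomp_d (L Vd lam : R) : R := lam * L / Vd.
Definition Dtran_d (L Rk t beta lam : R) : R := beta * lam * L / (t * Rk).
Definition Dtran_c (L Rk t lam : R) : R := (1 - lam) * L / (t * Rk).
Definition Dcomp_c (L Vc lam : R) : R := (1 - lam) * L / Vc.

Definition Dk (L Vd Rk t Vc beta lam : R) : R :=
  let a := Dcomp_d L Vd lam in
  let b := Dtran_d L Rk t beta lam in
  let c := Dtran_c L Rk t lam in
  let d := Dcomp_c L Vc lam in
  if Rle_dec c a then Rmax (a + b) (c + d)
  else c + Rmax b d.

Definition lam_star (Vd Rk t Vc beta : R) : R :=
  if Rle_dec (sqrt (beta * Vd * Vc)) (t * Rk)
  then Vd * (t * Rk + Vc) / (Vd * Vc * (1 + beta) + t * Rk * (Vd + Vc))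
  else Vd / (Vd + t * Rk).

(* Main.v *)
Require Import Defs.
From Stdlib Require Import Reals Lra Psatz.
Open Scope R_scope.

Definition DD (a b c d : R) : R :=
  if Rle_dec c a then Rmax (a + b) (c + d) else c + Rmax b d.

Lemma DD_lb (a b c d : R) :
  a + b <= DD a b c d /\ c + d <= DD a b c d /\ c + b <= DD a b c d.
Proof.
  unfold DD; destruct (Rle_dec c a).
  - pose proof (Rmax_l (a+b) (c+d)); pose proof (Rmax_r (a+b) (c+d)); lra.
  - pose proof (Rmax_l b d); pose proof (Rmax_r b d); lra.
Qed.

Lemma Dk_eq L Vd Rk t Vc beta lam :
  0 < L -> 0 < Vd -> 0 < Rk -> 0 < t -> 0 < Vc ->
  Dk L Vd Rk t Vc beta lam =
  DD (lam * (L/Vd)) (beta * lam * (L/(t*Rk))) ((1-lam) * (L/(t*Rk)))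
     ((1-lam) * (L/Vc)).
Proof.
  intros. unfold Dk, DD, Dcomp_d, Dtran_d, Dtran_c, Dcomp_c.
  replace (lam * L / Vd) with (lam * (L/Vd)) by (field; lra).
  replace (beta * lam * L / (t * Rk)) with (beta * lam * (L/(t*Rk))) by (field; nra).
  replace ((1 - lam) * L / (t * Rk)) with ((1-lam) * (L/(t*Rk))) by (field; nra).
  replace ((1 - lam) * L / Vc) with ((1-lam) * (L/Vc)) by (field; lra).
  reflexivity.
Qed.

Lemma DD_eq1 a b c d : c <= a -> c + d <= a + b -> DD a b c d = a + b.
Proof. intros. unfold DD; destruct (Rle_dec c a); [|lra]. apply Rmax_left; lra. Qed.

Theorem lemma1 (L Vd Rk t Vc beta : R)
  (hL : 0 < L) (hVd : 0 < Vd) (hR : 0 < Rk) (ht : 0 < t) (hVc : 0 < Vc)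
  (hb0 : 0 < beta) (hb1 : beta < 1) :
  0 <= lam_star Vd Rk t Vc beta <= 1 /\
  forall lam : R, 0 <= lam <= 1 ->
    Dk L Vd Rk t Vc beta (lam_star Vd Rk t Vc beta) <= Dk L Vd Rk t Vc beta lam.
Proof.
  assert (hT : 0 < t * Rk) by nra.
  set (T := t * Rk) in *.
  set (u := L / Vd). set (v := L / T). set (w := L / Vc).
  assert (hu : 0 < u) by (unfold u; apply Rdiv_lt_0_compat; lra).
  assert (hv : 0 < v) by (unfold v; apply Rdiv_lt_0_compat; lra).
  assert (hw : 0 < w) by (unfold w; apply Rdiv_lt_0_compat; lra).
  assert (Hc : sqrt (beta * Vd * Vc) <= T <-> beta * v * v <= u * w).
  { assert (E : beta * v * v - u * w = L * L / (T*T*Vd*Vc) * (beta*Vd*Vc - T*T)).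
    { unfold u, v, w; field; lra. }
    assert (P : 0 < L * L / (T*T*Vd*Vc)).
    { apply Rdiv_lt_0_compat; [nra|]. assert (0 < T*T) by nra. assert (0 < T*T*Vd) by nra. nra. }
    assert (hbv : 0 <= beta * Vd * Vc) by (assert (0 < beta*Vd) by nra; nra).
    split; intro H.
    - assert (beta * Vd * Vc <= T*T).
      { rewrite <- (sqrt_def (beta*Vd*Vc)) by lra.
        pose proof (sqrt_pos (beta*Vd*Vc)). nra. }
      nra.
    - assert (beta * Vd * Vc <= T*T) by nra.
      rewrite <- (sqrt_square T) by lra. apply sqrt_le_1_alt; lra. }
  unfold lam_star. fold T.
  destruct (Rle_dec (sqrt (beta * Vd * Vc)) T) as [H|H].
  - apply Hc in H.
    set (S := u + beta * v + v + w).
    assert (hS : 0 < S) by (unfold S; nra).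
    set (s := Vd * (T + Vc) / (Vd * Vc * (1 + beta) + T * (Vd + Vc))).
    assert (Es : s = (v + w) / S).
    { unfold s, S, u, v, w. field. assert (0 < L*T) by nra. assert (0 < L*Vd) by nra. assert (0<beta*L*Vd) by nra.
      assert (0 < Vd*T) by nra. assert (0 < Vd*Vc) by nra.
      repeat split; apply Rgt_not_eq; nra. }
    assert (Ss : s * S = v + w) by (rewrite Es; field; lra).
    assert (h0 : 0 <= s) by (rewrite Es; apply Rlt_le, Rdiv_lt_0_compat; lra).
    assert (h1 : s <= 1).
    { apply (Rmult_le_reg_r S); [lra|]. rewrite Ss. unfold S. nra. }
    split; [lra|].
    intros lam Hl.
    rewrite !Dk_eq by lra. fold u. fold T. fold v w.
    assert (Eq1 : s * (u + beta * v) = (1 - s) * (v + w)) by (unfold S in Ss; nra).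
    assert (Cond : (1 - s) * v <= s * u).
    { assert (K : (s * u - (1 - s) * v) * S = u * w - beta * v * v)
        by (rewrite Es; unfold S in *; field; lra).
      assert (0 <= (s * u - (1 - s) * v) * S) by lra. nra. }
    rewrite DD_eq1 by nra.
    destruct (DD_lb (lam * u) (beta * lam * v) ((1 - lam) * v) ((1 - lam) * w))
      as [A [B C]].
    destruct (Rle_dec s lam).
    + assert (0 <= (lam - s) * (u + beta * v)) by (apply Rmult_le_pos; nra). nra.
    + assert (0 <= (s - lam) * (v + w)) by (apply Rmult_le_pos; nra). nra.
  - assert (H' : u * w < beta * v * v).
    { destruct (Rle_dec (beta * v * v) (u * w)) as [r|r]; [|lra].
      exfalso; apply H, Hc, r. }
    set (s := Vd / (Vd + T)).
    assert (Es : s = v / (u + v)).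
    { unfold s, u, v. field. repeat split; apply Rgt_not_eq; nra. }
    assert (Ss : s * (u + v) = v) by (rewrite Es; field; lra).
    assert (h0 : 0 <= s) by (rewrite Es; apply Rlt_le, Rdiv_lt_0_compat; lra).
    assert (h1 : s <= 1).
    { apply (Rmult_le_reg_r (u+v)); [lra|]. rewrite Ss. nra. }
    split; [lra|].
    intros lam Hl.
    rewrite !Dk_eq by lra. fold u. fold T. fold v w.
    assert (Cond : (1 - s) * w <= beta * s * v).
    { assert (K : (beta * s * v - (1 - s) * w) * (u + v) = beta * v * v - u * w)
        by (rewrite Es; field; lra).
      assert (0 <= (beta * s * v - (1 - s) * w) * (u + v)) by lra. nra. }
    rewrite DD_eq1 by nra.
    destruct (DD_lb (lam * u) (beta * lam * v) ((1 - lam) * v) ((1 - lam) * w))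
      as [A [B C]].
    destruct (Rle_dec s lam).
    + assert (0 <= (lam - s) * (u + beta * v)) by (apply Rmult_le_pos; nra). nra.
    + assert (0 <= (s - lam) * ((1 - beta) * v)) by (apply Rmult_le_pos; nra). nra.
Qed.
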